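(* Let $p$ be a prime and let $G$ be a finite $p$-group. Let $c_p$ be the number of distinct cyclic subgroups of order $p$ of $G$; then $\mathcal{P}^*(G)$ has exactly $c_p$ connected components $H_1,\dots,H_{c_p}$. For each $i$, let $\tilde{H_i}$ denote the subgraph of $\mathcal{P}(G)$ induced on the vertex set $V(H_i)\cup\{1\}$. Then $$\kappa(\mathcal{P}(G))=\kappa(\tilde{H_1})\cdot\kappa(\tilde{H_2})\cdots\kappa(\tilde{H_{c_p}}),$$ where $\kappa(\Gamma)$ denotes the number of spanning trees of a graph $\Gamma$.
   Context: For a finite group $G$, the power graph $\mathcal{P}(G)$ is the simple undirected graph with vertex set $G$, two distinct vertices $x,y$ being adjacent iff $\langle x\rangle\subseteq\langle y\rangle$ or $\langle y\rangle\subseteq\langle x\rangle$. $\mathcal{P}^*(G)$ denotes the graph obtained from $\mathcal{P}(G)$ by deleting the vertex $1$. *)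

(* Defs.v *)
From Stdlib Require Import ClassicalEpsilon.
From mathcomp Require Import all_boot all_order all_fingroup all_solvable.
Set Implicit Arguments. Unset Strict Implicit. Unset Printing Implicit Defensive.
Local Open Scope group_scope.

Definition pbool (P : Prop) : bool :=
  if excluded_middle_informative P then true else false.

Section Graphs.
Variable T : finType.

(* A simple graph on T is given by an adjacency relation [adj];
   a subgraph "induced on S" has vertex set S and all adj-edges inside S.
   Edge sets are sets of 2-element subsets {x,y}. *)
Definition edge_rel (E : {set {set T}}) : rel T := fun a b => [set a; b] \in E.

Definition is_spanning_tree (adj : rel T) (S : {set T}) (E : {set {set T}}) : Prop :=
  (forall e, e \in E -> exists x y, [/\ x \in S, y \in S, x != y, adj x y & e = [set x; y]]) /\
  (forall x y, x \in S -> y \in S -> connect (edge_rel E) x y) /\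
  (forall s : seq T, uniq s -> 2 < size s -> ~~ path.cycle (edge_rel E) s).

Definition kappa (adj : rel T) (S : {set T}) : nat :=
  #|[set E : {set {set T}} | pbool (is_spanning_tree adj S E)]|.

Definition induced_rel (adj : rel T) (S : {set T}) : rel T :=
  fun a b => [&& a \in S, b \in S & adj a b].

Definition components (adj : rel T) (S : {set T}) : {set {set T}} :=
  [set [set y in S | connect (induced_rel adj S) x y] | x in S].

End Graphs.

Definition power_adj (gT : finGroupType) : rel gT :=
  fun x y => (x != y) && ((<[x]> \subset <[y]>) || (<[y]> \subset <[x]>)).

Definition num_cyclic_subgroups (gT : finGroupType) (G : {set gT}) (p : nat) : nat :=
  #|[set <[x]> | x in G & #[x] == p]|.

(* Main.v *)
Require Import Defs.
From mathcomp Require Import all_boot all_order all_fingroup all_solvable.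
From Stdlib Require Import ClassicalEpsilon.
Set Implicit Arguments. Unset Strict Implicit. Unset Printing Implicit Defensive.


Lemma pboolP (P : Prop) : reflect P (pbool P).
Proof. rewrite /pbool; case: excluded_middle_informative => h; by constructor. Qed.

Section G.
Variables (T : finType) (adj : rel T).

Definition edges_in (S : {set T}) (E : {set {set T}}) :=
  forall e, e \in E -> exists x y, [/\ x \in S, y \in S, x != y, adj x y & e = [set x; y]].

Lemma edge_rel_sym (E : {set {set T}}) : symmetric (edge_rel E).
Proof. by move=> a b; rewrite /edge_rel setUC. Qed.

Lemma edge_rel_in S E a b : edges_in S E -> edge_rel E a b -> [/\ a \in S, b \in S & a != b].
Proof.
move=> hE /hE [x [y [xS yS xy _ e]]].
have ha : a \in [set x; y] by rewrite -e !inE eqxx.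
have hb : b \in [set x; y] by rewrite -e !inE eqxx orbT.
split.
- by move: ha; rewrite !inE => /orP[]/eqP->.
- by move: hb; rewrite !inE => /orP[]/eqP->.
apply/eqP => ab; subst b.
have hx : x \in [set a; a] by rewrite e !inE eqxx.
have hy : y \in [set a; a] by rewrite e !inE eqxx orbT.
move: hx hy; rewrite !inE !orbb => /eqP hx /eqP hy.
by rewrite hx hy eqxx in xy.
Qed.

Lemma set2_sub (a b : T) (A : {set T}) : a \in A -> b \in A -> [set a; b] \subset A.
Proof. by move=> ha hb; apply/subsetP => z; rewrite !inE => /orP[]/eqP->. Qed.

Lemma chain (A B : {set T}) (v : T) (E : {set {set T}}) :
  (forall x, x \in A -> x \in B -> x = v) ->
  (forall e, e \in E -> (e \subset A) || (e \subset B)) ->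
  forall x t, path (edge_rel E) x t -> x \in A -> x != v ->
  all (fun z => z != v) t -> all (fun z => z \in A) t.
Proof.
move=> hI hs x t; elim: t x => //= y t IH x /andP[exy pt] xA xv /andP[yv tv].
have yA : y \in A.
  case/orP: (hs _ exy) => sub.
    by apply: (subsetP sub); rewrite !inE eqxx orbT.
  have xB : x \in B by apply: (subsetP sub); rewrite !inE eqxx.
  by rewrite (hI x xA xB) eqxx in xv.
by rewrite yA /=; apply: (IH y).
Qed.

Lemma cycle_side (A B : {set T}) (v : T) (E : {set {set T}}) :
  (forall x, x \in A -> x \in B -> x = v) ->
  (forall e, e \in E -> (e \subset A) || (e \subset B)) ->
  edges_in (A :|: B) E -> v \in A -> v \in B ->
  forall s, uniq s -> 2 < size s -> path.cycle (edge_rel E) s ->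
  all (fun z => z \in A) s || all (fun z => z \in B) s.
Proof.
move=> hI hs hE vA vB s us ss cs.
have hI' : forall x, x \in B -> x \in A -> x = v by move=> x a b; apply: hI.
have hs' : forall e, e \in E -> (e \subset B) || (e \subset A)
  by move=> e /hs; rewrite orbC.
case: (boolP (v \in s)) => vs.
  case: (rot_to vs) => i s' rs.
  rewrite -!(eq_all_r (mem_rot i s)) rs.
  rewrite -(rot_uniq i) rs in us.
  rewrite -(size_rot i) rs in ss.
  rewrite -(rot_cycle i) rs in cs.
  case: s' rs us ss cs => [|y t] // _ us ss.
  rewrite /= rcons_path => /and3P[evy pyt ely].
  move: us => /= /andP[]; rewrite inE negb_or => /andP[vy vt] _.
  have yv : y != v by rewrite eq_sym.
  have tv : all (fun z => z != v) t.
    by apply/allP => z zt; apply: contraNneq vt => <-.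
  have [_ yS _] := edge_rel_in hE evy.
  move: yS; rewrite inE => /orP[yA|yB].
    by rewrite vA yA (chain hI hs pyt yA yv tv).
  by rewrite vB yB (chain hI' hs' pyt yB yv tv) orbT.
case: s vs us ss cs => [|y t] // vs us ss.
rewrite /= rcons_path => /andP[pyt ely].
have [_ yS _] := edge_rel_in hE ely.
have yv : y != v by apply: contraNneq vs => <-; rewrite inE eqxx.
have tv : all (fun z => z != v) t.
  by apply/allP => z zt; apply: contraNneq vs => <-; rewrite inE zt orbT.
move: yS; rewrite inE => /orP[yA|yB].
  by rewrite yA (chain hI hs pyt yA yv tv).
by rewrite yB (chain hI' hs' pyt yB yv tv) orbT.
Qed.


Definition restr (A : {set T}) (E : {set {set T}}) := [set e in E | e \subset A].

Lemma tree_edges S E : is_spanning_tree adj S E -> edges_in S E.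
Proof. by case. Qed.

Lemma union_tree (S1 S2 : {set T}) v E1 E2 :
  v \in S1 -> v \in S2 -> (forall x, x \in S1 -> x \in S2 -> x = v) ->
  is_spanning_tree adj S1 E1 -> is_spanning_tree adj S2 E2 ->
  is_spanning_tree adj (S1 :|: S2) (E1 :|: E2).
Proof.
move=> v1 v2 hI [h1e [h1c h1a]] [h2e [h2c h2a]].
have hE : edges_in (S1 :|: S2) (E1 :|: E2).
  move=> e; rewrite inE => /orP[/h1e|/h2e] [x [y [xS yS xy axy ee]]];
  by exists x, y; split => //; rewrite inE ?xS ?yS ?orbT.
have hs : forall e, e \in E1 :|: E2 -> (e \subset S1) || (e \subset S2).
  move=> e; rewrite inE => /orP[/h1e|/h2e] [x [y [xS yS xy axy ->]]].
    by rewrite (set2_sub xS yS).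
  by rewrite (set2_sub xS yS) orbT.
have sub1 : subrel (edge_rel E1) (connect (edge_rel (E1 :|: E2))).
  by move=> a b h; apply: connect1; move: h; rewrite /edge_rel inE => ->.
have sub2 : subrel (edge_rel E2) (connect (edge_rel (E1 :|: E2))).
  by move=> a b h; apply: connect1; move: h; rewrite /edge_rel inE => ->; rewrite orbT.
have cv : forall z, z \in S1 :|: S2 -> connect (edge_rel (E1 :|: E2)) z v.
  move=> z; rewrite inE => /orP[z1|z2].
    by apply: (connect_sub sub1); apply: h1c.
  by apply: (connect_sub sub2); apply: h2c.
split => //; split.
  move=> x y xS yS; apply: (connect_trans (cv x xS)).
  by rewrite (sym_connect_sym (@edge_rel_sym _)); apply: cv.
move=> s us ss; apply/negP => cs.
case/orP: (cycle_side hI hs hE v1 v2 us ss cs) => hall.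
  have : path.cycle (edge_rel E1) s.
    apply: (sub_in_cycle _ hall cs) => a b aS bS; rewrite /edge_rel inE.
    case/orP => // h2; have [a2 b2 ab] := edge_rel_in h2e h2.
    by rewrite (hI a aS a2) (hI b bS b2) eqxx in ab.
  by apply/negP; apply: h1a.
have : path.cycle (edge_rel E2) s.
  apply: (sub_in_cycle _ hall cs) => a b aS bS; rewrite /edge_rel inE.
  case/orP => // h1; have [a1 b1 ab] := edge_rel_in h1e h1.
  by rewrite (hI a a1 aS) (hI b b1 bS) eqxx in ab.
by apply/negP; apply: h2a.
Qed.

Lemma tree_split (S1 S2 : {set T}) v E :
  v \in S1 -> v \in S2 ->
  (forall x y, x \in S1 -> y \in S2 -> x != v -> y != v -> ~~ adj x y && ~~ adj y x) ->
  edges_in (S1 :|: S2) E -> forall e, e \in E -> (e \subset S1) || (e \subset S2).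
Proof.
move=> v1 v2 hX hE e /hE [x [y [xS yS xy axy ->]]].
move: xS yS; rewrite !inE.
case x1: (x \in S1); case y1: (y \in S1) => //=.
- by rewrite (set2_sub x1 y1).
- move=> _ y2; case: (eqVneq x v) => [xv|xv]; first by rewrite xv (set2_sub v2 y2) orbT.
  have yv : y != v by apply: contraFneq y1 => ->.
  by case/andP: (hX x y x1 y2 xv yv); rewrite axy.
- move=> x2 _; case: (eqVneq y v) => [yv|yv]; first by rewrite yv (set2_sub x2 v2) orbT.
  have xv : x != v by apply: contraFneq x1 => ->.
  by case/andP: (hX y x y1 x2 yv xv); rewrite axy.
- by move=> x2 y2; rewrite (set2_sub x2 y2) orbT.
Qed.

Lemma restr_tree (S1 S2 : {set T}) v E :
  v \in S1 -> v \in S2 -> (forall x, x \in S1 -> x \in S2 -> x = v) ->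
  (forall x y, x \in S1 -> y \in S2 -> x != v -> y != v -> ~~ adj x y && ~~ adj y x) ->
  is_spanning_tree adj (S1 :|: S2) E -> is_spanning_tree adj S1 (restr S1 E).
Proof.
move=> v1 v2 hI hX [hE [hc ha]].
have hs := tree_split v1 v2 hX hE.
split.
  move=> e; rewrite inE => /andP[/hE [x [y [_ _ xy axy ee]]] sub].
  exists x, y; split => //; apply: (subsetP sub); rewrite ee !inE eqxx ?orbT //.
have cv : forall x, x \in S1 -> connect (edge_rel (restr S1 E)) x v.
  move=> x x1; case: (eqVneq x v) => [->|xv]; first exact: connect0.
  have : connect (edge_rel E) x v by apply: hc; rewrite inE ?x1 ?v1.
  case/connectP => p pth vl; move: vl.
  case/shortenP: pth => p' pth' up _.
  case/lastP: p' pth' up => [|q y] pth' up /=; first by move=> vx; rewrite vx eqxx in xv.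
  rewrite last_rcons => vy; subst y.
  move: up; rewrite /= rcons_uniq => /andP[_ /andP[vq _]].
  move: (pth'); rewrite rcons_path => /andP[pq _].
  have qv : all (fun z => z != v) q.
    by apply/allP => z zq; apply: contraNneq vq => <-.
  have q1 := chain hI hs pq x1 xv qv.
  apply/connectP; exists (rcons q v); last by rewrite last_rcons.
  apply: (sub_in_path (P := mem S1)) pth'; last first.
    rewrite /= all_rcons; apply/and3P; split => //; by apply/allP => z /(allP q1).
  by move=> a b a1 b1; rewrite /edge_rel inE => ->; rewrite (set2_sub a1 b1).
split.
  move=> x y x1 y1; apply: (connect_trans (cv x x1)).
  by rewrite (sym_connect_sym (@edge_rel_sym _)); apply: cv.
move=> s us ss; apply/negP => cs; move: (ha s us ss); apply/negP; rewrite negbK.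
by apply: (sub_cycle _ cs) => a b; rewrite /edge_rel inE => /andP[].
Qed.


Lemma restr_union (S1 S2 : {set T}) v E1 E2 :
  (forall x, x \in S1 -> x \in S2 -> x = v) ->
  is_spanning_tree adj S1 E1 -> is_spanning_tree adj S2 E2 ->
  restr S1 (E1 :|: E2) = E1.
Proof.
move=> hI [h1e _] [h2e _]; apply/setP => e; rewrite !inE.
case e1: (e \in E1) => /=.
  by have [x [y [xS yS _ _ ->]]] := h1e e e1; rewrite set2_sub.
apply/negP => /andP[/h2e [x [y [xS yS xy _ ee]]] sub].
have x1 : x \in S1 by apply: (subsetP sub); rewrite ee !inE eqxx.
have y1 : y \in S1 by apply: (subsetP sub); rewrite ee !inE eqxx orbT.
by rewrite (hI x x1 xS) (hI y y1 yS) eqxx in xy.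
Qed.

Lemma union_restr (S1 S2 : {set T}) v E :
  v \in S1 -> v \in S2 ->
  (forall x y, x \in S1 -> y \in S2 -> x != v -> y != v -> ~~ adj x y && ~~ adj y x) ->
  is_spanning_tree adj (S1 :|: S2) E -> restr S1 E :|: restr S2 E = E.
Proof.
move=> v1 v2 hX [hE _]; have hs := tree_split v1 v2 hX hE.
apply/setP => e; rewrite !inE -andb_orr.
by case eE: (e \in E) => //=; apply: hs.
Qed.

Lemma glue (S1 S2 : {set T}) v :
  v \in S1 -> v \in S2 -> (forall x, x \in S1 -> x \in S2 -> x = v) ->
  (forall x y, x \in S1 -> y \in S2 -> x != v -> y != v -> ~~ adj x y && ~~ adj y x) ->
  kappa adj (S1 :|: S2) = kappa adj S1 * kappa adj S2.
Proof.
move=> v1 v2 hI hX.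
have hI' : forall x, x \in S2 -> x \in S1 -> x = v by move=> x a b; apply: hI.
have hX' : forall x y, x \in S2 -> y \in S1 -> x != v -> y != v -> ~~ adj x y && ~~ adj y x.
  by move=> x y a b c d; rewrite andbC; apply: hX.
rewrite /kappa -cardsX.
set D := setX _ _.
have -> : [set E | pbool (is_spanning_tree adj (S1 :|: S2) E)] =
          [set pr.1 :|: pr.2 | pr in D].
  apply/setP => E; rewrite inE; apply/idP/imsetP.
    move/pboolP => tE; exists (restr S1 E, restr S2 E); last by rewrite (union_restr v1 v2 hX tE).
    rewrite inE /= !inE; apply/andP; split; apply/pboolP.
      exact: (restr_tree v1 v2 hI hX tE).
    by rewrite setUC in tE; apply: (restr_tree v2 v1 hI' hX' tE).
  case=> [[E1 E2]]; rewrite inE /= !inE => /andP[/pboolP t1 /pboolP t2] ->.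
  by apply/pboolP; apply: (union_tree v1 v2 hI t1 t2).
apply: card_in_imset => [[E1 E2]] [E1' E2']; rewrite !inE /=.
move=> /andP[/pboolP t1 /pboolP t2] /andP[/pboolP t1' /pboolP t2'] eq.
have e1 : E1 = E1' by rewrite -(restr_union hI t1 t2) -(restr_union hI t1' t2') eq.
have e2 : E2 = E2'.
  by rewrite -(restr_union hI' t2 t1) -(restr_union hI' t2' t1') setUC eq setUC.
by rewrite e1 e2.
Qed.

End G.

Section C.
Variables (T : finType) (adj : rel T).
Hypothesis adj_sym : symmetric adj.

Lemma induced_sym (S : {set T}) : symmetric (induced_rel adj S).
Proof. by move=> a b; rewrite /induced_rel andbA [(a \in S) && _]andbC -andbA adj_sym. Qed.

Lemma comp_sub (S : {set T}) H : H \in components adj S -> H \subset S.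
Proof.
case/imsetP => x _ ->; apply/subsetP => y; rewrite inE => /andP[] //.
Qed.

Lemma comp_mem (S : {set T}) x : x \in S -> exists2 H, H \in components adj S & x \in H.
Proof.
move=> xS; exists [set y in S | connect (induced_rel adj S) x y].
  by apply/imsetP; exists x.
by rewrite inE xS connect0.
Qed.

Lemma comp_eq (S : {set T}) H H' z : H \in components adj S -> H' \in components adj S ->
  z \in H -> z \in H' -> H = H'.
Proof.
have cs := sym_connect_sym (induced_sym S).
case/imsetP => x _ -> /imsetP [x' _ ->]; rewrite !inE => /andP[zS xz] /andP[_ x'z].
apply/setP => y; rewrite !inE; case yS: (y \in S) => //=.
apply/idP/idP => h.
  by apply: (connect_trans x'z); rewrite cs in xz; apply: (connect_trans xz).
by apply: (connect_trans xz); rewrite cs in x'z; apply: (connect_trans x'z).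
Qed.

Lemma comp_adj (S : {set T}) H H' a b : H \in components adj S -> H' \in components adj S ->
  a \in H -> b \in H' -> adj a b -> H = H'.
Proof.
move=> hH hH' aH bH ab; apply: (comp_eq hH hH' _ bH).
move: (hH) aH; case/imsetP => x _ -> ; rewrite !inE => /andP[aS xa].
have bS : b \in S by apply: (subsetP (comp_sub hH')).
rewrite bS /=; apply: (connect_trans xa); apply: connect1.
by rewrite /induced_rel aS bS ab.
Qed.

Lemma kappa1 v : kappa adj [set v] = 1.
Proof.
rewrite /kappa -(cards1 (set0 : {set {set T}})); congr #|pred_of_set _|.
apply/setP => E; rewrite !inE; apply/pboolP/eqP.
  case=> hE _; apply/setP => e; rewrite inE; apply/negP => /hE [x [y [xS yS xy _ _]]].
  by move: xS yS xy; rewrite !inE => /eqP-> /eqP->; rewrite eqxx.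
move=> ->; split; first by move=> e; rewrite inE.
split; first by move=> x y; rewrite !inE => /eqP-> /eqP->; apply: connect0.
move=> [|x s] // _ _; rewrite /= rcons_path.
by case: s => [|y s] /=; rewrite /edge_rel inE ?andbF.
Qed.

Lemma mem_bigcup_seq (s : seq {set T}) x :
  x \in \bigcup_(H <- s) H -> exists2 H, H \in s & x \in H.
Proof.
elim: s => [|H s IH]; first by rewrite big_nil inE.
rewrite big_cons inE => /orP[xH|/IH [H' H's xH']].
  by exists H; rewrite ?inE ?eqxx.
by exists H'; rewrite ?inE ?H's ?orbT.
Qed.

Lemma kappa_seq (S : {set T}) v (s : seq {set T}) : v \notin S -> uniq s ->
  all (fun H => H \in components adj S) s ->
  kappa adj ([set v] :|: \bigcup_(H <- s) H) = \prod_(H <- s) kappa adj (H :|: [set v]).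
Proof.
move=> vS; elim: s => [|H s IH]; first by rewrite big_nil big_nil setU0 kappa1.
rewrite /= => /andP[Hs us] /andP[HC sC].
rewrite big_cons big_cons -(IH us sC).
have -> : [set v] :|: (H :|: \bigcup_(H0 <- s) H0) =
          (H :|: [set v]) :|: ([set v] :|: \bigcup_(H0 <- s) H0).
  by apply/setP => z; rewrite !inE; case: (z == v); case: (z \in H).
have HS := comp_sub HC.
apply: (@glue _ adj _ _ v); rewrite ?inE ?eqxx ?orbT //.
  move=> x; rewrite !inE => /orP[xH|/eqP->] // /orP[/eqP//|].
  case/mem_bigcup_seq => H' H's xH'.
  have eHH := comp_eq HC (allP sC _ H's) xH xH'.
  by rewrite eHH H's in Hs.
move=> x y; rewrite !inE => /orP[xH|/eqP->]; last by rewrite eqxx.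
case/orP => [/eqP->|]; first by rewrite eqxx.
case/mem_bigcup_seq => H' H's yH' _ _.
have H'C := allP sC _ H's.
apply/andP; split; apply/negP => a.
  by have eHH := comp_adj HC H'C xH yH' a; rewrite eHH H's in Hs.
by have eHH := comp_adj H'C HC yH' xH a; rewrite -eHH H's in Hs.
Qed.

Lemma kappa_comp (S : {set T}) v : v \notin S ->
  kappa adj ([set v] :|: S) = \prod_(H in components adj S) kappa adj (H :|: [set v]).
Proof.
move=> vS; rewrite -big_enum -(kappa_seq (S:=S) vS) ?enum_uniq //; last first.
  by apply/allP => H; rewrite mem_enum.
congr (kappa adj (_ :|: _)); rewrite big_enum; apply/setP => x.
apply/idP/bigcupP => [xS|[H HC xH]]; last exact: (subsetP (comp_sub HC)).
by have [H HC xH] := comp_mem xS; exists H.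
Qed.

End C.
Local Open Scope group_scope.

Section Grp.
Variables (gT : finGroupType) (p : nat) (G : {group gT}).
Hypotheses (pr : prime p) (pG : p.-group G).

Lemma power_adj_sym : symmetric (@power_adj gT).
Proof. by move=> x y; rewrite /power_adj eq_sym orbC. Qed.

Local Notation S0 := (G :\ (1 : gT)).
Local Notation X := [set <[x]> | x in G & #[x] == p].
Local Notation R := (induced_rel (@power_adj gT) S0).

Lemma exP y : y \in G -> y != 1 -> exists2 q, q \in <[y]> & #[q] = p.
Proof.
move=> yG y1.
have pY : p.-group <[y]> by apply: pgroupS pG; rewrite cycle_subG.
have ny : <[y]> != 1 by rewrite cycle_eq1.
have [_ pd _] := pgroup_pdiv pY ny.
by have [q qY oq] := Cauchy pr pd; exists q.
Qed.

Lemma stepP x z P : z \in G -> z != 1 -> power_adj x z -> P \in X ->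
  P \subset <[x]> -> P \subset <[z]>.
Proof.
move=> zG z1 /andP[_ /orP[xz|zx]] PX Px; first exact: subset_trans Px xz.
case/imsetP: PX => w; rewrite inE => /andP[wG /eqP ow] eP; subst P.
have [q qz oq] := exP zG z1.
have qx : <[q]> \subset <[x]> by apply: subset_trans zx; rewrite cycle_subG.
have e : <[w]> :==: <[q]>.
  by rewrite (eq_subG_cyclic (cycle_cyclic x) Px qx) -/#[w] -/#[q] ow oq.
by rewrite (eqP e) cycle_subG.
Qed.

Lemma XP P : P \in X -> exists w, [/\ P = <[w]>, w \in S0 & #[w] = p].
Proof.
case/imsetP => w; rewrite inE => /andP[wG /eqP ow] ->; exists w; split => //.
rewrite !inE wG andbT -order_gt1 ow; exact: prime_gt1.
Qed.

Lemma Lconn x y P : x \in S0 -> y \in S0 -> P \in X -> P \subset <[x]> ->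
  connect R x y = (P \subset <[y]>).
Proof.
move=> xS yS PX Px; apply/idP/idP.
  case/connectP => q pq ->; elim: q x xS Px pq => [|z q IH] x xS Px //=.
  case/andP => /and3P[_ zS axz] pq; apply: IH => //.
  by move: zS; rewrite !inE => /andP[z1 zG]; apply: (stepP zG z1 axz).
have [w [eP wS ow]] := XP PX; subst P.
have cxw : forall u, u \in S0 -> <[w]> \subset <[u]> -> connect R u w.
  move=> u uS wu; case: (eqVneq u w) => [->|uw]; first exact: connect0.
  by apply: connect1; rewrite /induced_rel uS wS /power_adj uw wu orbT.
move=> wy; apply: (connect_trans (cxw x xS Px)).
rewrite (sym_connect_sym (induced_sym power_adj_sym S0)).
exact: cxw.
Qed.

Lemma count_comp : #|components (@power_adj gT) S0| = #|X|.
Proof.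
pose phi (P : {set gT}) := [set y in S0 | P \subset <[y]>].
have -> : components (@power_adj gT) S0 = phi @: X.
  apply/setP => H; apply/imsetP/imsetP.
    case=> x xS ->.
    have [xG x1] : x \in G /\ x != 1 by move: xS; rewrite !inE => /andP[].
    have [q qx oq] := exP xG x1.
    have qG : q \in G by apply: (subsetP _ _ qx); rewrite cycle_subG.
    have PX : <[q]> \in X by apply/imsetP; exists q; rewrite // inE qG oq eqxx.
    exists <[q]> => //; apply/setP => y; rewrite !inE.
    case yS: ((y != 1) && (y \in G)) => //=.
    have yS0 : y \in S0 by rewrite !inE.
    by rewrite (Lconn xS yS0 PX) // cycle_subG.
  case=> P PX ->; have [w [eP wS ow]] := XP PX.
  exists w => //; apply/setP => y; rewrite !inE.
  case yS: ((y != 1) && (y \in G)) => //=.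
  have yS0 : y \in S0 by rewrite !inE.
  by rewrite (Lconn wS yS0 PX) ?eP.
apply: card_in_imset => P P' PX P'X e.
have [w [eP wS ow]] := XP PX; have [w' [eP' wS' ow']] := XP P'X.
have : w \in phi P by rewrite inE wS eP subxx.
rewrite e inE => /andP[_ sub].
apply/eqP; rewrite eq_sym eqEcard; subst P P'; rewrite sub /= -/#[w] -/#[w'] ow ow' leqnn.
done.
Qed.

End Grp.

Unset Implicit Arguments.
Local Open Scope group_scope.

Theorem corollary3p2 (gT : finGroupType) (p : nat) (G : {group gT}) :
  prime p -> p.-group G ->
  #|components (@power_adj gT) (G :\ (1%g : gT))| = num_cyclic_subgroups G p /\
  kappa (@power_adj gT) G =
    (\prod_(H in components (@power_adj gT) (G :\ (1%g : gT)))
        kappa (@power_adj gT) ((H : {set gT}) :|: [set 1%g : gT]))%N.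
Proof.
move=> pr pG; split; first by rewrite (count_comp pr pG).
have v1 : (1 : gT) \notin G :\ 1 by rewrite !inE eqxx.
rewrite -(kappa_comp (@power_adj_sym gT) v1).
by rewrite setD1K // group1.
Qed.
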